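(* Let $k:[0,\infty)\to[0,\infty)$ be of the form $k(x)=\nu((x,\infty))$ for a finite Borel measure $\nu$ on $(0,\infty)$ with $\int_{(2,\infty)}\log x\,\nu(dx)<\infty$ and $k(0)=\nu((0,\infty))=\alpha\in(2,\infty)$, and let $\varphi(t)=\exp\big(\int_0^\infty(e^{itx}-1)\frac{k(x)}{x}dx\big)$. Then there exist a function $L:(1,\infty)\to[0,\infty)$ that is slowly varying at $\infty$ and a constant $B>0$ such that \[ \lim_{|t|\to\infty}\frac{|t|^{\alpha}|\varphi(t)|}{L(|t|)}=B. \]
   Context: A measurable function $U$ on $(1,\infty)$ (or $[0,\infty)$) with values in $[0,\infty)$ is slowly varying at $\infty$ if $\lim_{t\to\infty}U(tx)/U(t)=1$ for every $x>0$. Here $\varphi$ is the characteristic function of the stationary distribution of the Ornstein–Uhlenbeck process $dX_t=-\lambda X_tdt+dJ_{\lambda t}$ driven by a compound Poisson subordinator $J$ with Lévy measure $\nu$. *)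

(* Defs.v *)
From Stdlib Require Import Reals ClassicalEpsilon.
Open Scope R_scope.

Definition RInt_is (f : R -> R) (a b v : R) : Prop :=
  exists pr : Riemann_integrable f a b, RiemannInt pr = v.

Definition improper_int_0_inf_is (f : R -> R) (l : R) : Prop :=
  forall eps, 0 < eps -> exists d M, 0 < d /\ 0 < M /\
    forall a b, 0 < a < d -> M < b ->
      exists v, RInt_is f a b v /\ Rabs (v - l) < eps.

Definition improper_int_from_is (f : R -> R) (c l : R) : Prop :=
  forall eps, 0 < eps -> exists M, c < M /\
    forall b, M < b -> exists v, RInt_is f c b v /\ Rabs (v - l) < eps.

Definition improper_int_0_inf (f : R -> R) : R :=
  epsilon (inhabits 0) (fun l => improper_int_0_inf_is f l).

(* k is the tail function x |-> nu((x,oo)) of a finite Borel measure nu on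
   (0,oo): equivalently k is nonincreasing, right-continuous on [0,oo),
   nonnegative, and tends to 0 at +oo (Lebesgue-Stieltjes correspondence). *)
Definition is_tail_function (k : R -> R) : Prop :=
  (forall x y, 0 <= x <= y -> k y <= k x) /\
  (forall x, 0 <= x -> 0 <= k x) /\
  (forall x, 0 <= x -> forall eps, 0 < eps -> exists d, 0 < d /\
      forall y, x <= y < x + d -> Rabs (k y - k x) < eps) /\
  (forall eps, 0 < eps -> exists M, forall x, M < x -> Rabs (k x) < eps).

(* phi(t) = exp( int_0^oo (e^{itx}-1) k(x)/x dx ), written as real and
   imaginary parts. *)
Definition phi_exp_re (k : R -> R) (t : R) : R :=
  improper_int_0_inf (fun x => (cos (t * x) - 1) * k x / x).
Definition phi_exp_im (k : R -> R) (t : R) : R :=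
  improper_int_0_inf (fun x => sin (t * x) * k x / x).
Definition phi_re (k : R -> R) (t : R) : R :=
  exp (phi_exp_re k t) * cos (phi_exp_im k t).
Definition phi_im (k : R -> R) (t : R) : R :=
  exp (phi_exp_re k t) * sin (phi_exp_im k t).
Definition phi_abs (k : R -> R) (t : R) : R :=
  sqrt (phi_re k t ^ 2 + phi_im k t ^ 2).

Definition slowly_varying (L : R -> R) : Prop :=
  forall x, 0 < x -> forall eps, 0 < eps -> exists M, 1 < M /\
    forall t, M < t -> Rabs (L (t * x) / L t - 1) < eps.

(* Main.v *)
Require Import Defs.
From Stdlib Require Import Reals.
Open Scope R_scope.
From Stdlib Require Import Lra Lia ClassicalEpsilon FunctionalExtensionality.
From Coquelicot Require Import Coquelicot.
Open Scope R_scope.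

Lemma RInt_plus' (f g : R -> R) a b : ex_RInt f a b -> ex_RInt g a b ->
  RInt (fun x => f x + g x) a b = RInt f a b + RInt g a b.
Proof. intros. exact (RInt_plus f g a b H H0). Qed.

Lemma RInt_minus' (f g : R -> R) a b : ex_RInt f a b -> ex_RInt g a b ->
  RInt (fun x => f x - g x) a b = RInt f a b - RInt g a b.
Proof. intros. exact (RInt_minus f g a b H H0). Qed.

Lemma RInt_scal' (f : R -> R) a b l : ex_RInt f a b ->
  RInt (fun x => l * f x) a b = l * RInt f a b.
Proof. intros. exact (RInt_scal f a b l H). Qed.

Lemma ex_RInt_plus' (f g : R -> R) a b : ex_RInt f a b -> ex_RInt g a b ->
  ex_RInt (fun x => f x + g x) a b.
Proof. intros. exact (ex_RInt_plus f g a b H H0). Qed.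

Lemma ex_RInt_minus' (f g : R -> R) a b : ex_RInt f a b -> ex_RInt g a b ->
  ex_RInt (fun x => f x - g x) a b.
Proof. intros. exact (ex_RInt_minus f g a b H H0). Qed.

Lemma ex_RInt_scal' (f : R -> R) a b l : ex_RInt f a b ->
  ex_RInt (fun x => l * f x) a b.
Proof. intros. exact (ex_RInt_scal f a b l H). Qed.

Lemma RInt_Chasles' (f : R -> R) a b c : ex_RInt f a b -> ex_RInt f b c ->
  RInt f a b + RInt f b c = RInt f a c.
Proof. intros. exact (RInt_Chasles f a b c H H0). Qed.

Lemma RInt_const' a b (c : R) : RInt (fun _ => c) a b = (b - a) * c.
Proof. rewrite RInt_const. reflexivity. Qed.

Lemma RInt_swap' (f : R -> R) a b : ex_RInt f a b -> RInt f b a = - RInt f a b.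
Proof. intros. rewrite <- (opp_RInt_swap f a b H). reflexivity. Qed.

Lemma sandwich (f : R -> R) a b : a < b ->
  (forall eps, 0 < eps -> exists g1 g2 : R -> R, ex_RInt g1 a b /\ ex_RInt g2 a b /\
     (forall x, a <= x <= b -> g1 x <= f x <= g2 x) /\
     RInt g2 a b - RInt g1 a b < eps) -> ex_RInt f a b.
Proof.
  intros Hab H.
  unfold ex_RInt, is_RInt.
  apply (proj1 (@filterlim_locally_cauchy SF_seq R_CompleteSpace (Riemann_fine a b) (Riemann_fine_filter a b) (fun ptd => scal (sign (b-a)) (Riemann_sum f ptd)))).
  intros eps.
  assert (He3 : 0 < eps / 3) by (destruct eps; simpl; lra).
  destruct (H _ He3) as (g1 & g2 & i1 & i2 & Hg & Hd).
  assert (c1 := RInt_correct _ _ _ i1).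
  assert (c2 := RInt_correct _ _ _ i2).
  unfold is_RInt in c1, c2.
  assert (L1 := c1 _ (locally_ball (RInt g1 a b) (mkposreal _ He3))).
  assert (L2 := c2 _ (locally_ball (RInt g2 a b) (mkposreal _ He3))).
  simpl in L1, L2.
  assert (Hs : sign (b - a) = 1) by (apply sign_eq_1; lra).
  assert (Rmin a b = a) by (apply Rmin_left; lra).
  assert (Rmax a b = b) by (apply Rmax_right; lra).
  exists (fun ptd => (pointed_subdiv ptd /\ SF_h ptd = Rmin a b /\ seq.last (SF_h ptd) (SF_lx ptd) = Rmax a b) /\
     ball (RInt g1 a b) (eps/3) (scal (sign (b - a)) (Riemann_sum g1 ptd)) /\
     ball (RInt g2 a b) (eps/3) (scal (sign (b - a)) (Riemann_sum g2 ptd))).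
  split.
  - apply filter_and. 
    + unfold Riemann_fine, within. apply filter_forall. auto.
    + apply filter_and; assumption.
  - intros u v [[Pu [hu lu]] [b1u b2u]] [[Pv [hv lv]] [b1v b2v]].
    change (Rabs (sign (b - a) * Riemann_sum f v - sign (b - a) * Riemann_sum f u) < eps).
    change (Rabs (sign (b - a) * Riemann_sum g1 u - RInt g1 a b) < eps/3) in b1u.
    change (Rabs (sign (b - a) * Riemann_sum g2 u - RInt g2 a b) < eps/3) in b2u.
    change (Rabs (sign (b - a) * Riemann_sum g1 v - RInt g1 a b) < eps/3) in b1v.
    change (Rabs (sign (b - a) * Riemann_sum g2 v - RInt g2 a b) < eps/3) in b2v.
    rewrite Hs in *. rewrite !Rmult_1_l in *.
    rewrite H0 in *; rewrite H1 in *.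
    assert (u1 : Riemann_sum g1 u <= Riemann_sum f u).
    { apply Riemann_sum_le; auto. intros t Ht; apply Hg. rewrite lu in Ht; rewrite hu in Ht; exact Ht. }
    assert (u2 : Riemann_sum f u <= Riemann_sum g2 u).
    { apply Riemann_sum_le; auto. intros t Ht; apply Hg. rewrite lu in Ht; rewrite hu in Ht; exact Ht. }
    assert (v1 : Riemann_sum g1 v <= Riemann_sum f v).
    { apply Riemann_sum_le; auto. intros t Ht; apply Hg. rewrite lv in Ht; rewrite hv in Ht; exact Ht. }
    assert (v2 : Riemann_sum f v <= Riemann_sum g2 v).
    { apply Riemann_sum_le; auto. intros t Ht; apply Hg. rewrite lv in Ht; rewrite hv in Ht; exact Ht. }
    apply Rabs_def1; apply Rabs_def2 in b1u; apply Rabs_def2 in b2u;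
      apply Rabs_def2 in b1v; apply Rabs_def2 in b2v; lra.
Qed.

Ltac fixeq := lazymatch goal with |- ?x = ?y => change (@eq R x y) end.

Lemma Rabs_le_bnd x y : Rabs x <= y -> - y <= x <= y.
Proof. unfold Rabs; destruct (Rcase_abs x); intros; lra. Qed.
Lemma Rabs_lt_bnd x y : Rabs x < y -> - y < x < y.
Proof. unfold Rabs; destruct (Rcase_abs x); intros; lra. Qed.
Lemma bnd_Rabs_le x y : - y <= x <= y -> Rabs x <= y.
Proof. unfold Rabs; destruct (Rcase_abs x); intros; lra. Qed.
Lemma bnd_Rabs_lt x y : - y < x < y -> Rabs x < y.
Proof. unfold Rabs; destruct (Rcase_abs x); intros; lra. Qed.


Definition glue (c : R) (g : R -> R) (v : R) : R -> R :=
  fun x => if Rle_dec x c then g x else v.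

Lemma glue_int (g : R -> R) (v a c del : R) : a <= c -> 0 < del -> ex_RInt g a c ->
        ex_RInt (glue c g v) a (c + del) /\
        RInt (glue c g v) a (c + del) = RInt g a c + del * v.
Proof.
        intros Hc Hdel ig.
        assert (e1 : ex_RInt (glue c g v) a c).
        { apply ex_RInt_ext with g; auto.
          intros x Hx. rewrite Rmin_left in Hx by lra. rewrite Rmax_right in Hx by lra.
          unfold glue; destruct (Rle_dec x c); [reflexivity | lra]. }
        assert (e2 : ex_RInt (glue c g v) c (c + del)).
        { apply ex_RInt_ext with (fun _ => v); [|apply ex_RInt_const].
          intros x Hx. rewrite Rmin_left in Hx by lra. rewrite Rmax_right in Hx by lra.
          unfold glue; destruct (Rle_dec x c); [lra | reflexivity]. }
        split. { apply ex_RInt_Chasles with c; auto. }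
        rewrite <- (RInt_Chasles' _ a c (c + del)) by auto.
        rewrite (RInt_ext (glue c g v) g a c).
        rewrite (RInt_ext (glue c g v) (fun _ => v) c (c + del)).
        rewrite RInt_const'. fixeq. ring.
        - intros x Hx. rewrite Rmin_left in Hx by lra. rewrite Rmax_right in Hx by lra.
          unfold glue; destruct (Rle_dec x c); [lra | reflexivity].
        - intros x Hx. rewrite Rmin_left in Hx by lra. rewrite Rmax_right in Hx by lra.
          unfold glue; destruct (Rle_dec x c); [reflexivity | lra].
Qed.

Lemma osc_int (f m : R -> R) a b C D : a < b -> 0 <= C -> 0 <= D ->
  (forall u v, a <= u <= v -> v <= b -> m v <= m u) ->
  (forall u s v, a <= u -> u <= s -> s <= v -> v <= b ->
      Rabs (f s - f u) <= C * (m u - m v) + D * (v - u)) ->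
  ex_RInt f a b.
Proof.
  intros Hab HC HD Hm Hosc.
  apply sandwich; auto.
  intros eps Heps.
  set (X := 2 * (b - a) * (C * (m a - m b) + D * (b - a))).
  assert (HX : 0 <= X).
  { unfold X. assert (m b <= m a) by (apply Hm; lra).
    apply Rmult_le_pos; [lra|]. apply Rplus_le_le_0_compat; apply Rmult_le_pos; lra. }
  destruct (archimed_cor1 (eps / (X + 1))) as (N & HN & HN0).
  { apply Rdiv_lt_0_compat; lra. }
  assert (HNp : 0 < INR N) by (apply lt_0_INR; lia).
  set (del := (b - a) / INR N).
  assert (Hdel : 0 < del) by (unfold del; apply Rdiv_lt_0_compat; lra).
  assert (Claim : forall j : nat, (j <= N)%nat -> exists g1 g2,
     ex_RInt g1 a (a + INR j * del) /\ ex_RInt g2 a (a + INR j * del) /\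
     (forall x, a <= x <= a + INR j * del -> g1 x <= f x <= g2 x) /\
     RInt g2 a (a + INR j * del) - RInt g1 a (a + INR j * del) <=
       2 * del * (C * (m a - m (a + INR j * del)) + D * (INR j * del))).
  { induction j as [|j IH]; intros Hj.
    - exists f, f. replace (a + INR 0 * del) with a by (simpl; ring).
      split; [apply ex_RInt_point|]. split; [apply ex_RInt_point|]. split.
      + intros; lra.
      + rewrite !RInt_point. simpl. replace (a + 0 * del) with a by ring. 
        assert (0 * del = 0) by ring. rewrite H. lra.
    - destruct IH as (g1 & g2 & i1 & i2 & Hg & Hd). lia.
      assert (HjN : INR j + 1 <= INR N).
      { rewrite <- S_INR. apply le_INR. lia. }
      set (c := a + INR j * del).
      assert (Hc : a <= c) by (unfold c; assert (0 <= INR j) by apply pos_INR; nra).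
      assert (Hc' : c + del <= b).
      { unfold c. replace b with (a + INR N * del).
        nra. unfold del. field. lra. }
      assert (Hcc : a + INR (S j) * del = c + del) by (unfold c; rewrite S_INR; ring).
      rewrite Hcc.
      set (w := C * (m c - m (c + del)) + D * del).
      exists (glue c g1 (f c - w)), (glue c g2 (f c + w)).
      assert (E1 : forall (g : R -> R) (v : R), ex_RInt g a c ->
        ex_RInt (glue c g v) a (c + del) /\
        RInt (glue c g v) a (c + del) = RInt g a c + del * v).
      { intros g v ig. apply glue_int; auto; lra. }
      destruct (E1 g1 (f c - w) i1) as [j1 r1].
      destruct (E1 g2 (f c + w) i2) as [j2 r2].
      split; [exact j1|]. split; [exact j2|]. split.
      + intros x Hx. unfold glue. destruct (Rle_dec x c).
        * apply Hg. fold c. lra.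
        * assert (Hos := Hosc c x (c + del) Hc ltac:(lra) ltac:(lra) Hc').
          replace (c + del - c) with del in Hos by ring.
          fold w in Hos. apply Rabs_le_bnd in Hos. lra.
      + rewrite r1, r2. fold c in Hd. rewrite S_INR.
        assert (Eq : 2 * del * (C * (m a - m (c + del)) + D * ((INR j + 1) * del)) =
           2 * del * (C * (m a - m c) + D * (INR j * del)) + 2 * del * w) by (unfold w; ring).
        rewrite Eq. unfold w. lra. }
  destruct (Claim N (le_n N)) as (g1 & g2 & i1 & i2 & Hg & Hd).
  assert (HbN : a + INR N * del = b) by (unfold del; field; lra).
  rewrite HbN in i1, i2, Hg, Hd.
  exists g1, g2. repeat split; auto; try (apply Hg; auto).
  eapply Rle_lt_trans; [exact Hd|].
  replace (INR N * del) with (b - a) by (rewrite <- HbN; ring).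
  replace (2 * del * (C * (m a - m b) + D * (b - a))) with (X / INR N).
  2: { unfold X, del. field. lra. }
  unfold Rdiv. 
  apply Rle_lt_trans with (X * (eps / (X + 1))).
  { apply Rmult_le_compat_l; lra. }
  unfold Rdiv. 
  assert (0 < X + 1) by lra.
  apply Rmult_lt_reg_r with (X + 1); auto.
  rewrite Rmult_assoc, Rmult_assoc, Rinv_l by lra. nra.
Qed.


Lemma cos_lip x y : Rabs (cos x - cos y) <= Rabs (x - y).
Proof.
  destruct (MVT_abs cos (fun c => - sin c) y x) as (c & Hc & _).
  { intros; apply derivable_pt_lim_cos. }
  rewrite Hc. rewrite Rabs_Ropp.
  assert (Rabs (sin c) <= 1) by (apply Rabs_le; apply SIN_bound).
  assert (0 <= Rabs (x - y)) by apply Rabs_pos. nra.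
Qed.

Lemma cos_lip_t t x y : 0 <= t -> Rabs (cos (t * x) - cos (t * y)) <= t * Rabs (x - y).
Proof.
  intros. eapply Rle_trans; [apply cos_lip|].
  replace (t * x - t * y) with (t * (x - y)) by ring.
  rewrite Rabs_mult, Rabs_right by lra. lra.
Qed.

Lemma prod_int (c h : R -> R) a b Lc Mc Mh : a <= b -> 0 <= Lc -> 0 <= Mc -> 0 <= Mh ->
  (forall x y, a <= x <= b -> a <= y <= b -> Rabs (c x - c y) <= Lc * Rabs (x - y)) ->
  (forall x, a <= x <= b -> Rabs (c x) <= Mc) ->
  (forall x y, a <= x -> x <= y -> y <= b -> h y <= h x) ->
  (forall x, a <= x <= b -> 0 <= h x <= Mh) ->
  ex_RInt (fun x => c x * h x) a b.
Proof.
  intros Hab HL HMc HMh Hlip Hc Hm Hh.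
  destruct (Req_dec a b) as [<-|Hne]. { apply ex_RInt_point. }
  apply (osc_int _ h a b Mc (Mh * Lc)); try lra.
  - apply Rmult_le_pos; lra.
  - intros u v Hu Hv. apply Hm; lra.
  - intros u s v Hu Hus Hsv Hv.
    replace (c s * h s - c u * h u) with (c s * (h s - h u) + h u * (c s - c u)) by ring.
    eapply Rle_trans; [apply Rabs_triang|].
    rewrite !Rabs_mult.
    assert (A1 : Rabs (c s) <= Mc) by (apply Hc; lra).
    assert (A2 : Rabs (h s - h u) <= h u - h v).
    { assert (h s <= h u) by (apply Hm; lra). assert (h v <= h s) by (apply Hm; lra).
      rewrite Rabs_left1 by lra. lra. }
    assert (A3 : Rabs (h u) <= Mh).
    { destruct (Hh u) as [h1 h2]; [lra|]. rewrite Rabs_right by lra. lra. }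
    assert (A4 : Rabs (c s - c u) <= Lc * (v - u)).
    { eapply Rle_trans; [apply Hlip; lra|]. rewrite Rabs_right by lra.
      apply Rmult_le_compat_l; lra. }
    assert (0 <= Rabs (c s)) by apply Rabs_pos.
    assert (0 <= Rabs (h s - h u)) by apply Rabs_pos.
    assert (0 <= Rabs (h u)) by apply Rabs_pos.
    assert (0 <= Rabs (c s - c u)) by apply Rabs_pos.
    assert (0 <= h u - h v) by (assert (h v <= h u) by (apply Hm; lra); lra).
    apply Rplus_le_compat.
    + apply Rle_trans with (Mc * Rabs (h s - h u)); [apply Rmult_le_compat_r; lra|].
      apply Rmult_le_compat_l; lra.
    + apply Rle_trans with (Mh * Rabs (c s - c u)); [apply Rmult_le_compat_r; lra|].
      rewrite Rmult_assoc. apply Rmult_le_compat_l; lra.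
Qed.

Lemma cos_mono_int (t : R) (h : R -> R) p q : 0 <= t -> p <= q ->
  (forall x y, p <= x -> x <= y -> y <= q -> h y <= h x) ->
  (forall x, p <= x <= q -> 0 <= h x) ->
  ex_RInt (fun x => cos (t * x) * h x) p q.
Proof.
  intros Ht Hpq Hm Hh.
  apply (prod_int _ _ p q t 1 (h p)); try lra.
  - apply Hh; lra.
  - intros; apply cos_lip_t; auto.
  - intros; apply Rabs_le; apply COS_bound.
  - auto.
  - intros x Hx; split; [apply Hh; lra| apply Hm; lra].
Qed.

Lemma int_cos_period t c : 0 < t -> RInt (fun x => cos (t * x)) c (c + 2 * PI / t) = 0.
Proof.
  intros Ht.
  apply is_RInt_unique.
  replace 0 with (minus (sin (t * (c + 2 * PI / t)) / t) (sin (t * c) / t)).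
  - apply (is_RInt_derive (fun x => sin (t * x) / t)).
    + intros x _. auto_derive; auto. field. lra.
    + intros x _. apply continuity_pt_filterlim.
      apply continuity_pt_comp with (f1 := fun x => t * x) (f2 := cos).
      * apply continuity_pt_mult; [apply continuity_pt_const; intro; auto| apply continuity_pt_id].
      * apply continuity_cos.
  - unfold minus, plus, opp; simpl.
    replace (t * (c + 2 * PI / t)) with (t * c + 2 * INR 1 * PI) by (simpl; field; lra).
    rewrite sin_period. field. lra.
Qed.

Lemma ex_RInt_cos t p q : ex_RInt (fun x => cos (t * x)) p q.
Proof.
  apply (@ex_RInt_continuous R_CompleteNormedModule). intros z _.
  apply continuity_pt_filterlim.
  apply continuity_pt_comp with (f1 := fun x => t * x) (f2 := cos).
  - apply continuity_pt_mult; [apply continuity_pt_const; intro; auto| apply continuity_pt_id].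
  - apply continuity_cos.
Qed.

Lemma cos_period_bound (t : R) (h : R -> R) c : 0 < t ->
  (forall x y, c <= x -> x <= y -> y <= c + 2 * PI / t -> h y <= h x) ->
  Rabs (RInt (fun x => cos (t * x) * h x) c (c + 2 * PI / t)) <=
    2 * PI / t * (h c - h (c + 2 * PI / t)).
Proof.
  intros Ht Hm.
  set (P := 2 * PI / t).
  assert (HP : 0 < P) by (unfold P; apply Rdiv_lt_0_compat; [ assert (0 < PI) by apply PI_RGT_0; lra | lra]).
  set (hc := h (c + P)).
  assert (i1 : ex_RInt (fun x => cos (t * x) * (h x - hc)) c (c + P)).
  { apply cos_mono_int; try lra. 
    - intros; assert (h y <= h x) by (apply Hm; unfold P in *; lra). lra.
    - intros x Hx. unfold hc. assert (h (c + P) <= h x) by (apply Hm; unfold P in *; lra). lra. }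
  assert (i2 := ex_RInt_cos t c (c + P)).
  rewrite (RInt_ext _ (fun x => cos (t * x) * (h x - hc) + hc * cos (t * x))).
  2: { intros; fixeq; unfold hc; ring. }
  rewrite RInt_plus'; auto. 2: apply ex_RInt_scal'; auto.
  rewrite RInt_scal'; auto. unfold P. rewrite int_cos_period; auto. rewrite Rmult_0_r, Rplus_0_r.
  fold P.
  replace (P * (h c - hc)) with ((c + P - c) * (h c - hc)) by ring.
  apply abs_RInt_le_const; auto; try lra.
  intros x Hx. rewrite Rabs_mult.
  assert (Rabs (cos (t * x)) <= 1) by (apply Rabs_le; apply COS_bound).
  assert (hc <= h x) by (unfold hc; apply Hm; unfold P in *; lra).
  assert (h x <= h c) by (apply Hm; unfold P in *; lra).
  rewrite (Rabs_right (h x - hc)) by lra.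
  assert (0 <= Rabs (cos (t * x))) by apply Rabs_pos. nra.
Qed.

Lemma cos_mono_bound (t : R) (h : R -> R) p q : 0 < t -> p <= q ->
  (forall x y, p <= x -> x <= y -> y <= q -> h y <= h x) ->
  (forall x, p <= x <= q -> 0 <= h x) ->
  Rabs (RInt (fun x => cos (t * x) * h x) p q) <= 4 * PI * h p / t.
Proof.
  intros Ht Hpq Hm Hh.
  set (P := 2 * PI / t).
  assert (HP : 0 < P) by (unfold P; apply Rdiv_lt_0_compat; [ assert (0 < PI) by apply PI_RGT_0; lra | lra]).
  assert (Claim : forall n : nat, forall c, p <= c <= q -> q <= c + INR n * P ->
     Rabs (RInt (fun x => cos (t * x) * h x) c q) <= P * h c + P * (h c - h q)).
  { induction n as [|n IH]; intros c Hc Hq.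
    - simpl in Hq. assert (c = q) by lra. subst c. rewrite RInt_point.
      change (Rabs 0 <= P * h q + P * (h q - h q)). rewrite Rabs_R0.
      assert (0 <= h q) by (apply Hh; lra). nra.
    - assert (hq : h q <= h c) by (apply Hm; lra).
      destruct (Rle_dec q (c + P)) as [Hle|Hgt].
      + eapply Rle_trans.
        * apply abs_RInt_le_const with (M := h c); try lra.
          { apply cos_mono_int; try lra; intros; [apply Hm | apply Hh]; lra. }
          intros x Hx. rewrite Rabs_mult.
          assert (Rabs (cos (t * x)) <= 1) by (apply Rabs_le; apply COS_bound).
          assert (0 <= h x) by (apply Hh; lra). assert (h x <= h c) by (apply Hm; lra).
          rewrite (Rabs_right (h x)) by lra.
          assert (0 <= Rabs (cos (t * x))) by apply Rabs_pos. nra.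
        * assert (0 <= h c) by (apply Hh; lra). nra.
      + assert (e1 : ex_RInt (fun x => cos (t * x) * h x) c (c + P)).
        { apply cos_mono_int; try lra; intros; [apply Hm | apply Hh]; lra. }
        assert (e2 : ex_RInt (fun x => cos (t * x) * h x) (c + P) q).
        { apply cos_mono_int; try lra; intros; [apply Hm | apply Hh]; lra. }
        rewrite <- (RInt_Chasles' _ c (c + P) q) by auto.
        eapply Rle_trans; [apply Rabs_triang|].
        assert (B1 := cos_period_bound t h c Ht).
        fold P in B1.
        assert (B1' : Rabs (RInt (fun x => cos (t * x) * h x) c (c + P)) <= P * (h c - h (c + P))).
        { apply B1. intros; apply Hm; lra. }
        assert (B2 : Rabs (RInt (fun x => cos (t * x) * h x) (c + P) q) <= P * h (c + P) + P * (h (c + P) - h q)).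
        { apply IH. lra. rewrite S_INR in Hq. lra. }
        assert (h (c + P) <= h c) by (apply Hm; lra).
        nra. }
  destruct (archimed ((q - p) / P)) as [Hup _].
  assert (Hz : (0 <= up ((q - p) / P))%Z).
  { apply le_IZR. assert (0 <= (q - p) / P) by (apply Rdiv_le_0_compat; lra). simpl. lra. }
  destruct (IZN _ Hz) as [n Hn].
  assert (Hn' : q <= p + INR n * P).
  { rewrite INR_IZR_INZ, <- Hn.
    assert ((q - p) / P * P = q - p) by (field; lra).
    assert ((q - p) / P * P <= IZR (up ((q - p) / P)) * P) by (apply Rmult_le_compat_r; lra).
    lra. }
  eapply Rle_trans; [apply (Claim n p); lra|].
  assert (0 <= h q) by (apply Hh; lra). assert (h q <= h p) by (apply Hm; lra).
  replace (4 * PI * h p / t) with (2 * P * h p) by (unfold P; field; lra).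
  nra.
Qed.


Definition kprops (k : R -> R) (al : R) :=
  (forall x y, 0 <= x -> x <= y -> k y <= k x) /\ (forall x, 0 <= x -> 0 <= k x) /\ k 0 = al.

Lemma k_le_al k al : kprops k al -> forall x, 0 <= x -> k x <= al.
Proof. intros (Hm & _ & H0) x Hx. rewrite <- H0. apply Hm; lra. Qed.

Lemma ex_pos_gen (F : R -> R) : (forall p q, 0 < p -> p <= q -> ex_RInt F p q) ->
  forall p q, 0 < p -> 0 < q -> ex_RInt F p q.
Proof.
  intros H p q Hp Hq. destruct (Rle_dec p q).
  - apply H; lra.
  - apply ex_RInt_swap. apply H; lra.
Qed.

Lemma kx_mono k al : kprops k al -> forall x y, 0 < x -> x <= y -> k y / y <= k x / x.
Proof.
  intros Hk x y Hx Hxy. destruct Hk as (Hm & Hn & _).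
  assert (k y <= k x) by (apply Hm; lra). assert (0 <= k y) by (apply Hn; lra).
  unfold Rdiv. apply Rle_trans with (k y * / x).
  - apply Rmult_le_compat_l; auto. apply Rinv_le_contravar; lra.
  - apply Rmult_le_compat_r; auto. left; apply Rinv_0_lt_compat; lra.
Qed.

Lemma kx_nn k al : kprops k al -> forall x, 0 < x -> 0 <= k x / x.
Proof. intros (_ & Hn & _) x Hx. apply Rdiv_le_0_compat; auto. apply Hn; lra. Qed.

Lemma ex_ckx k al t : kprops k al -> 0 <= t -> forall p q, 0 < p -> 0 < q ->
  ex_RInt (fun x => cos (t * x) * (k x / x)) p q.
Proof.
  intros Hk Ht. apply ex_pos_gen. intros p q Hp Hpq.
  apply cos_mono_int; auto.
  - intros; apply (kx_mono k al); auto; lra.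
  - intros; apply (kx_nn k al); auto; lra.
Qed.

Lemma ex_kx k al : kprops k al -> forall p q, 0 < p -> 0 < q ->
  ex_RInt (fun x => k x / x) p q.
Proof.
  intros Hk p q Hp Hq. apply ex_RInt_ext with (fun x => cos (0 * x) * (k x / x)).
  - intros. rewrite Rmult_0_l, cos_0. fixeq. ring.
  - apply (ex_ckx k al); auto; lra.
Qed.

Lemma kprops_one : kprops (fun _ => 1) 1.
Proof. repeat split; intros; lra. Qed.

Lemma ex_cinv t : 0 <= t -> forall p q, 0 < p -> 0 < q ->
  ex_RInt (fun x => cos (t * x) * / x) p q.
Proof.
  intros Ht p q Hp Hq. apply ex_RInt_ext with (fun x => cos (t * x) * (1 / x)).
  - intros. fixeq. unfold Rdiv. ring.
  - apply (ex_ckx _ _ t kprops_one); auto.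
Qed.

Lemma ex_inv : forall p q, 0 < p -> 0 < q -> ex_RInt (fun x => / x) p q.
Proof.
  intros p q Hp Hq. apply ex_RInt_ext with (fun x => 1 / x).
  - intros. fixeq. unfold Rdiv. ring.
  - apply (ex_kx _ _ kprops_one); auto.
Qed.

Lemma abs_RInt_le_const' (f : R -> R) a b M : ex_RInt f a b ->
  (forall t, Rmin a b <= t <= Rmax a b -> Rabs (f t) <= M) ->
  Rabs (RInt f a b) <= Rabs (b - a) * M.
Proof.
  intros He H. destruct (Rle_dec a b).
  - rewrite Rmin_left in H by lra. rewrite Rmax_right in H by lra. rewrite (Rabs_right (b - a)) by lra.
    apply abs_RInt_le_const; [lra | auto | intros; apply H; lra].
  - rewrite Rmin_right in H by lra. rewrite Rmax_left in H by lra. rewrite RInt_swap'; auto.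
    rewrite Rabs_Ropp. rewrite (Rabs_left (b - a)) by lra.
    replace (- (b - a)) with (a - b) by ring.
    apply abs_RInt_le_const; [lra| apply ex_RInt_swap; auto | intros; apply H; lra].
  apply ex_RInt_swap; auto. Qed.

Lemma RInt_is_of_ex (f : R -> R) a b : ex_RInt f a b -> RInt_is f a b (RInt f a b).
Proof.
  intros H. exists (ex_RInt_Reals_0 f a b H). symmetry. apply RInt_Reals.
Qed.

Lemma RInt_is_val (f : R -> R) a b v : RInt_is f a b v -> RInt f a b = v.
Proof. intros [pr Hpr]. rewrite <- Hpr. apply RInt_Reals. Qed.

Lemma RInt_is_ex (f : R -> R) a b v : RInt_is f a b v -> ex_RInt f a b.
Proof. intros [pr Hpr]. exact (ex_RInt_Reals_1 f a b pr). Qed.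

Lemma improper_from_cauchy (f : R -> R) :
  (forall a b, 0 < a -> 0 < b -> ex_RInt f a b) ->
  (forall eps, 0 < eps -> exists d M, 0 < d /\ 0 < M /\
     forall a a' b b', 0 < a < d -> 0 < a' < d -> M < b -> M < b' ->
       Rabs (RInt f a b - RInt f a' b') < eps) ->
  exists l, improper_int_0_inf_is f l.
Proof.
  intros Hex Hc.
  set (u := fun n : nat => RInt f (/ (INR n + 1)) (INR n + 1)).
  assert (Hn1 : forall n, 0 < INR n + 1) by (intro n; assert (0 <= INR n) by apply pos_INR; lra).
  assert (Large : forall d M, 0 < d -> exists N : nat, forall n, (N <= n)%nat ->
      / (INR n + 1) < d /\ M < INR n + 1).
  { intros d M Hd.
    destruct (archimed (Rmax M (/ d))) as [Hup _].
    assert (Hz : (0 <= up (Rmax M (/ d)))%Z).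
    { apply le_IZR. assert (0 < / d) by (apply Rinv_0_lt_compat; lra).
      assert (/ d <= Rmax M (/ d)) by apply Rmax_r. simpl. lra. }
    destruct (IZN _ Hz) as [N HN]. exists N. intros n Hn.
    assert (INR N <= INR n) by (apply le_INR; lia).
    rewrite HN, <- INR_IZR_INZ in Hup.
    assert (M <= Rmax M (/ d)) by apply Rmax_l.
    assert (/ d <= Rmax M (/ d)) by apply Rmax_r.
    split; [|lra].
    rewrite <- (Rinv_inv d). apply Rinv_lt_contravar.
    - apply Rmult_lt_0_compat; [apply Rinv_0_lt_compat; lra | apply Hn1].
    - lra. }
  assert (Hcu : Cauchy_crit u).
  { intros eps Heps. destruct (Hc eps Heps) as (d & M & Hd & HM & H).
    destruct (Large d M Hd) as [N HN]. exists N. intros n m Hn Hm.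
    unfold R_dist, u. destruct (HN n) as [h1 h2]; [lia|]. destruct (HN m) as [h3 h4]; [lia|].
    apply H; try lra.
    - split; [apply Rinv_0_lt_compat, Hn1| exact h1].
    - split; [apply Rinv_0_lt_compat, Hn1| exact h3]. }
  destruct (Rcomplete.R_complete u Hcu) as [l Hl].
  exists l. intros eps Heps.
  destruct (Hc (eps/2) ltac:(lra)) as (d & M & Hd & HM & H).
  exists (Rmin d 1), (Rmax M 1).
  split; [apply Rmin_glb_lt; lra|]. split; [assert (M <= Rmax M 1) by apply Rmax_l; lra|].
  intros a b Ha Hb.
  assert (Rmin d 1 <= d) by apply Rmin_l. assert (Rmin d 1 <= 1) by apply Rmin_r.
  assert (M <= Rmax M 1) by apply Rmax_l. assert (1 <= Rmax M 1) by apply Rmax_r.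
  exists (RInt f a b). split.
  { apply RInt_is_of_ex. apply Hex; lra. }
  destruct (Hl (eps/2) ltac:(lra)) as [N1 HN1].
  destruct (Large d M Hd) as [N2 HN2].
  set (n := (N1 + N2)%nat).
  destruct (HN2 n) as [h1 h2]; [unfold n; lia|].
  assert (Hu := HN1 n ltac:(unfold n; lia)). unfold R_dist in Hu.
  assert (Hab := H a (/ (INR n + 1)) b (INR n + 1) ltac:(lra) ltac:(split; [apply Rinv_0_lt_compat, Hn1|exact h1]) ltac:(lra) h2).
  fold (u n) in Hab.
  apply Rabs_lt_bnd in Hu. apply Rabs_lt_bnd in Hab. apply bnd_Rabs_lt. lra.
Qed.

Lemma cauchy_fun_lim (D : R -> R) :
  (forall eps, 0 < eps -> exists T, forall s t, T < s -> T < t -> Rabs (D s - D t) < eps) ->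
  exists d, forall eps, 0 < eps -> exists T, forall t, T < t -> Rabs (D t - d) < eps.
Proof.
  intros Hc.
  set (u := fun n : nat => D (INR n)).
  assert (Large : forall T, exists N : nat, forall n, (N <= n)%nat -> T < INR n).
  { intros T. destruct (archimed (Rmax T 0)) as [Hup _].
    assert (Hz : (0 <= up (Rmax T 0))%Z).
    { apply le_IZR. assert (0 <= Rmax T 0) by apply Rmax_r. simpl. lra. }
    destruct (IZN _ Hz) as [N HN]. exists N. intros n Hn.
    assert (INR N <= INR n) by (apply le_INR; lia).
    rewrite HN, <- INR_IZR_INZ in Hup. assert (T <= Rmax T 0) by apply Rmax_l. lra. }
  assert (Hcu : Cauchy_crit u).
  { intros eps Heps. destruct (Hc eps Heps) as (T & H).
    destruct (Large T) as [N HN]. exists N. intros n m Hn Hm.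
    unfold R_dist, u. apply H; apply HN; lia. }
  destruct (Rcomplete.R_complete u Hcu) as [d Hd].
  exists d. intros eps Heps.
  destruct (Hc (eps/2) ltac:(lra)) as (T & H).
  exists T. intros t Ht.
  destruct (Hd (eps/2) ltac:(lra)) as [N1 HN1].
  destruct (Large T) as [N2 HN2].
  set (n := (N1 + N2)%nat).
  assert (Hu := HN1 n ltac:(unfold n; lia)). unfold R_dist, u in Hu.
  assert (Hh := H t (INR n) Ht (HN2 n ltac:(unfold n; lia))).
  apply Rabs_lt_bnd in Hu. apply Rabs_lt_bnd in Hh. apply bnd_Rabs_lt. lra.
Qed.


Lemma scale_cinv t a b : 0 < t -> 0 < a -> 0 < b ->
  RInt (fun x => cos (t * x) * / x) a b = RInt (fun u => cos u * / u) (t * a) (t * b).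
Proof.
  intros Ht Ha Hb.
  assert (E := RInt_comp_lin (fun u => cos u * / u) t 0 a b).
  rewrite !Rplus_0_r in E. rewrite <- E.
  - apply RInt_ext. intros x Hx.
    assert (0 < x).
    { destruct (Rle_dec a b); [rewrite Rmin_left in Hx | rewrite Rmin_right in Hx]; lra. }
    change (cos (t * x) * / x = t * (cos (t * x + 0) * / (t * x + 0))).
    rewrite Rplus_0_r. field. lra.
  - apply ex_RInt_ext with (fun x => cos (1 * x) * / x).
    + intros; rewrite Rmult_1_l; reflexivity.
    + apply (ex_cinv 1); try lra; apply Rmult_lt_0_compat; lra.
Qed.

Lemma scale_inv t a b : 0 < t -> 0 < a -> 0 < b ->
  RInt (fun x => / x) a b = RInt (fun u => / u) (t * a) (t * b).
Proof.
  intros Ht Ha Hb.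
  assert (E := RInt_comp_lin (fun u => / u) t 0 a b).
  rewrite !Rplus_0_r in E. rewrite <- E.
  - apply RInt_ext. intros x Hx.
    assert (0 < x).
    { destruct (Rle_dec a b); [rewrite Rmin_left in Hx | rewrite Rmin_right in Hx]; lra. }
    change (/ x = t * (/ (t * x + 0))).
    rewrite Rplus_0_r. field. lra.
  - apply ex_inv; apply Rmult_lt_0_compat; lra.
Qed.

Lemma one_minus_cos t x : 0 <= t -> 0 <= x -> Rabs (1 - cos (t * x)) <= t * x.
Proof.
  intros Ht Hx. replace (1 - cos (t * x)) with (- (cos (t * x) - cos (t * 0))).
  - rewrite Rabs_Ropp. eapply Rle_trans; [apply cos_lip_t; auto|].
    rewrite Rminus_0_r, Rabs_right by lra. lra.
  - rewrite Rmult_0_r, cos_0. ring.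
Qed.

Lemma Rabs_sub_triang x y : Rabs (x - y) <= Rabs x + Rabs y.
Proof. unfold Rminus; eapply Rle_trans; [apply Rabs_triang|]; rewrite Rabs_Ropp; lra. Qed.

Lemma inv_mono x y : 0 < x -> x <= y -> / y <= / x.
Proof. intros; apply Rinv_le_contravar; lra. Qed.

Lemma E_bound k al (Hk : kprops k al) (dl eta t a b : R) :
  0 < dl < 1 -> 0 < eta -> (forall y, 0 <= y <= dl -> al - k y <= eta) ->
  0 < t -> / t < dl -> 0 < a < / t -> 1 < b ->
  Rabs (RInt (fun x => (cos (t * x) - 1) * k x / x) a b + RInt (fun x => k x / x) (/ t) 1
        + RInt (fun x => k x / x) 1 b
        - al * (RInt (fun u => cos u * / u) (t * a) (t * b) - RInt (fun u => / u) (t * a) 1))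
  <= eta + 8 * PI * eta + 8 * PI * al / (dl * t).
Proof.
  intros Hdl Heta Hk0 Ht Htd Ha Hb.
  assert (Hit : 0 < / t) by (apply Rinv_0_lt_compat; lra).
  assert (HPI : 0 < PI) by apply PI_RGT_0.
  destruct Hk as (Hm & Hn & Hk0').
  assert (Hkle : forall x, 0 <= x -> k x <= al) by (intros; apply (k_le_al k al); [split; auto|]; auto).
  assert (Hk' : kprops k al) by (split; auto).
  pose (ckx := fun x => cos (t * x) * (k x / x)).
  pose (kx := fun x => k x / x).
  pose (cinv := fun x => cos (t * x) * / x).
  pose (inv := fun x : R => / x).
  assert (eckx : forall p q, 0 < p -> 0 < q -> ex_RInt ckx p q).
  { intros; apply (ex_ckx k al t); auto; lra. }
  assert (ekx : forall p q, 0 < p -> 0 < q -> ex_RInt kx p q).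
  { intros; apply (ex_kx k al); auto. }
  assert (ecinv : forall p q, 0 < p -> 0 < q -> ex_RInt cinv p q).
  { intros; apply (ex_cinv t); auto; lra. }
  assert (einv : forall p q, 0 < p -> 0 < q -> ex_RInt inv p q).
  { intros; apply ex_inv; auto. }
  assert (ES : RInt (fun x => (cos (t * x) - 1) * k x / x) a b = RInt ckx a b - RInt kx a b).
  { rewrite <- RInt_minus' by (apply eckx || apply ekx; lra).
    apply RInt_ext. intros. unfold ckx, kx. fixeq. unfold Rdiv. ring. }
  assert (EQ1 : RInt (fun u => cos u * / u) (t * a) (t * b) = RInt cinv a b).
  { unfold cinv. rewrite scale_cinv; auto; lra. }
  assert (EQ2 : RInt (fun u => / u) (t * a) 1 = RInt inv a (/ t)).
  { unfold inv. rewrite (scale_inv t a (/ t)); auto; try lra. rewrite Rinv_r by lra. reflexivity. }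
  rewrite ES, EQ1, EQ2. fold kx.
  rewrite <- (RInt_Chasles' kx a (/ t) b) by (apply ekx; lra).
  rewrite <- (RInt_Chasles' kx (/ t) 1 b) by (apply ekx; lra).
  rewrite <- (RInt_Chasles' ckx a (/ t) b) by (apply eckx; lra).
  rewrite <- (RInt_Chasles' ckx (/ t) dl b) by (apply eckx; lra).
  rewrite <- (RInt_Chasles' cinv a (/ t) b) by (apply ecinv; lra).
  rewrite <- (RInt_Chasles' cinv (/ t) dl b) by (apply ecinv; lra).
  set (A := al * RInt inv a (/ t) - RInt kx a (/ t) - (al * RInt cinv a (/ t) - RInt ckx a (/ t))).
  set (B := al * RInt cinv (/ t) dl - RInt ckx (/ t) dl).
  set (C := al * RInt cinv dl b - RInt ckx dl b).
  assert (Eexp : RInt ckx a (/ t) + (RInt ckx (/ t) dl + RInt ckx dl b) -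
     (RInt kx a (/ t) + (RInt kx (/ t) 1 + RInt kx 1 b)) + RInt kx (/ t) 1 + RInt kx 1 b -
     al * (RInt cinv a (/ t) + (RInt cinv (/ t) dl + RInt cinv dl b) - RInt inv a (/ t)) = A - B - C).
  { unfold A, B, C. ring. }
  rewrite Eexp.
  assert (BA : Rabs A <= eta).
  { assert (i1 := einv a (/ t) ltac:(lra) Hit).
    assert (i2 := ekx a (/ t) ltac:(lra) Hit).
    assert (i3 := ecinv a (/ t) ltac:(lra) Hit).
    assert (i4 := eckx a (/ t) ltac:(lra) Hit).
    assert (EA : A = RInt (fun x => (1 - cos (t * x)) * ((al - k x) / x)) a (/ t)).
    {
      unfold A. rewrite <- (RInt_scal' inv a (/ t) al i1), <- (RInt_scal' cinv a (/ t) al i3).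
      rewrite <- (RInt_minus' (fun x => al * inv x) kx a (/ t) (ex_RInt_scal' _ _ _ _ i1) i2).
      rewrite <- (RInt_minus' (fun x => al * cinv x) ckx a (/ t) (ex_RInt_scal' _ _ _ _ i3) i4).
      rewrite <- (RInt_minus' (fun x => al * inv x - kx x) (fun x => al * cinv x - ckx x) a (/ t)
         (ex_RInt_minus' _ _ _ _ (ex_RInt_scal' _ _ _ _ i1) i2)
         (ex_RInt_minus' _ _ _ _ (ex_RInt_scal' _ _ _ _ i3) i4)).
      apply RInt_ext. intros. unfold inv, kx, cinv, ckx. fixeq. unfold Rdiv. ring. }
    rewrite EA.
    eapply Rle_trans.
    - apply abs_RInt_le_const with (M := t * eta); [lra| |].
      + apply ex_RInt_ext with (fun x => al * inv x - kx x - (al * cinv x - ckx x)).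
        * intros. unfold inv, kx, cinv, ckx. fixeq. unfold Rdiv. ring.
        * exact (ex_RInt_minus' _ _ _ _ (ex_RInt_minus' _ _ _ _ (ex_RInt_scal' _ _ _ _ i1) i2)
             (ex_RInt_minus' _ _ _ _ (ex_RInt_scal' _ _ _ _ i3) i4)).
      + intros x Hx. rewrite Rabs_mult.
        assert (0 < x) by lra.
        assert (H1 := one_minus_cos t x ltac:(lra) ltac:(lra)).
        assert (H2 : 0 <= al - k x <= eta).
        { split; [assert (k x <= al) by (apply Hkle; lra); lra | apply Hk0; lra]. }
        rewrite (Rabs_right ((al - k x) / x)) by (apply Rle_ge, Rdiv_le_0_compat; lra).
        apply Rle_trans with (t * x * ((al - k x) / x)).
        { apply Rmult_le_compat_r; [apply Rdiv_le_0_compat; lra | auto]. }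
        replace (t * x * ((al - k x) / x)) with (t * (al - k x)) by (field; lra).
        apply Rmult_le_compat_l; lra.
    - replace ((/ t - a) * (t * eta)) with (eta - a * t * eta) by (field; lra).
      assert (0 <= a * t * eta) by (apply Rmult_le_pos; [apply Rmult_le_pos|]; lra). lra. }
  assert (BB : Rabs B <= 8 * PI * eta).
  { set (h := fun x => (k x - k dl) / x).
    assert (EB : B = (al - k dl) * RInt cinv (/ t) dl - RInt (fun x => cos (t * x) * h x) (/ t) dl).
    { assert (j1 := ecinv (/ t) dl Hit ltac:(lra)).
      assert (j2 := eckx (/ t) dl Hit ltac:(lra)).
      unfold B. rewrite <- (RInt_scal' cinv (/ t) dl al j1), <- (RInt_scal' cinv (/ t) dl (al - k dl) j1).
      assert (eh : ex_RInt (fun x => cos (t * x) * h x) (/ t) dl).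
      { apply cos_mono_int; try lra.
        - intros x y Hx Hxy Hy. unfold h.
          assert (k y <= k x) by (apply Hm; lra). assert (k dl <= k y) by (apply Hm; lra).
          unfold Rdiv. apply Rle_trans with ((k y - k dl) * / x).
          + apply Rmult_le_compat_l; [lra| apply inv_mono; lra].
          + apply Rmult_le_compat_r; [left; apply Rinv_0_lt_compat; lra| lra].
        - intros x Hx. unfold h. assert (k dl <= k x) by (apply Hm; lra).
          apply Rdiv_le_0_compat; lra. }
      rewrite <- (RInt_minus' (fun x => al * cinv x) ckx (/ t) dl (ex_RInt_scal' _ _ _ _ j1) j2).
      rewrite <- (RInt_minus' (fun x => (al - k dl) * cinv x) (fun x => cos (t * x) * h x) (/ t) dl (ex_RInt_scal' _ _ _ _ j1) eh).
      apply RInt_ext. intros. unfold cinv, ckx, h. fixeq. unfold Rdiv. ring. }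
    rewrite EB.
    assert (B1 : Rabs (RInt cinv (/ t) dl) <= 4 * PI).
    { unfold cinv.
      replace (4 * PI) with (4 * PI * (fun x => / x) (/ t) / t) by (simpl; field; lra).
      apply cos_mono_bound; try lra.
      - intros; apply inv_mono; lra.
      - intros; left; apply Rinv_0_lt_compat; lra. }
    assert (B2 : Rabs (RInt (fun x => cos (t * x) * h x) (/ t) dl) <= 4 * PI * eta).
    { eapply Rle_trans; [apply cos_mono_bound; try lra|].
      - intros x y Hx Hxy Hy. unfold h.
        assert (k y <= k x) by (apply Hm; lra). assert (k dl <= k y) by (apply Hm; lra).
        unfold Rdiv. apply Rle_trans with ((k y - k dl) * / x).
        + apply Rmult_le_compat_l; [lra| apply inv_mono; lra].
        + apply Rmult_le_compat_r; [left; apply Rinv_0_lt_compat; lra| lra].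
      - intros x Hx. unfold h. assert (k dl <= k x) by (apply Hm; lra).
        apply Rdiv_le_0_compat; lra.
      - unfold h. replace (4 * PI * ((k (/ t) - k dl) / / t) / t) with (4 * PI * (k (/ t) - k dl)) by (field; lra).
        assert (k (/ t) <= al) by (apply Hkle; lra).
        assert (al - k dl <= eta) by (apply Hk0; lra). nra. }
    assert (0 <= al - k dl <= eta).
    { split; [assert (k dl <= al) by (apply Hkle; lra); lra | apply Hk0; lra]. }
    eapply Rle_trans; [apply Rabs_sub_triang|]. 
    rewrite Rabs_mult, (Rabs_right (al - k dl)) by lra.
    assert (0 <= Rabs (RInt cinv (/ t) dl)) by apply Rabs_pos.
    nra. }
  assert (BC : Rabs C <= 8 * PI * al / (dl * t)).
  { assert (C1 : Rabs (RInt cinv dl b) <= 4 * PI * / dl / t).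
    { unfold cinv. apply (cos_mono_bound t (fun x => / x)); try lra.
      - intros; apply inv_mono; lra.
      - intros; left; apply Rinv_0_lt_compat; lra. }
    assert (C2 : Rabs (RInt ckx dl b) <= 4 * PI * (k dl / dl) / t).
    { unfold ckx. apply (cos_mono_bound t (fun x => k x / x)); try lra.
      - intros; apply (kx_mono k al); auto; lra.
      - intros; apply (kx_nn k al); auto; lra. }
    assert (k dl <= al) by (apply Hkle; lra).
    assert (0 <= al) by (rewrite <- Hk0'; apply Hn; lra).
    assert (C2' : 4 * PI * (k dl / dl) / t <= 4 * PI * al / (dl * t)).
    { replace (4 * PI * (k dl / dl) / t) with (k dl * (4 * PI / (dl * t))) by (field; lra).
      replace (4 * PI * al / (dl * t)) with (al * (4 * PI / (dl * t))) by (field; lra).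
      apply Rmult_le_compat_r; auto. left; apply Rdiv_lt_0_compat; [lra| apply Rmult_lt_0_compat; lra]. }
    unfold C. eapply Rle_trans; [apply Rabs_sub_triang|].
    rewrite Rabs_mult, (Rabs_right al) by lra.
    replace (8 * PI * al / (dl * t)) with (al * (4 * PI * / dl / t) + 4 * PI * al / (dl * t)) by (field; lra).
    apply Rplus_le_compat; [apply Rmult_le_compat_l|]; lra. }
  replace (A - B - C) with (A + (- B) + (- C)) by ring.
  eapply Rle_trans; [apply Rabs_triang|].
  eapply Rle_trans; [apply Rplus_le_compat_r; apply Rabs_triang|].
  rewrite !Rabs_Ropp. lra.
Qed.


Definition Qf (p q : R) := RInt (fun u => cos u * / u) p q - RInt (fun u => / u) p 1.

Lemma ex_cu p q : 0 < p -> 0 < q -> ex_RInt (fun u => cos u * / u) p q.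
Proof.
  intros. apply ex_RInt_ext with (fun u => cos (1 * u) * / u).
  - intros; rewrite Rmult_1_l; reflexivity.
  - apply ex_cinv; lra.
Qed.

Lemma cu_bound p q : 0 < p -> 0 < q -> Rabs (RInt (fun u => cos u * / u) p q) <= 4 * PI / Rmin p q.
Proof.
  intros Hp Hq.
  assert (G : forall p q, 0 < p -> p <= q -> Rabs (RInt (fun u => cos u * / u) p q) <= 4 * PI / p).
  { intros p0 q0 Hp0 Hpq.
    rewrite (RInt_ext _ (fun u => cos (1 * u) * / u)).
    2: { intros; rewrite Rmult_1_l; reflexivity. }
    replace (4 * PI / p0) with (4 * PI * (fun x => / x) p0 / 1) by (simpl; field; lra).
    apply cos_mono_bound; try lra.
    - intros; apply inv_mono; lra.
    - intros; left; apply Rinv_0_lt_compat; lra. }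
  destruct (Rle_dec p q).
  - rewrite Rmin_left by lra. apply G; lra.
  - rewrite Rmin_right by lra. rewrite RInt_swap' by (apply ex_cu; lra).
    rewrite Rabs_Ropp. apply G; lra.
Qed.

Lemma Q_cauchy : forall eps, 0 < eps -> exists d M, 0 < d /\ 0 < M /\
  forall p p' q q', 0 < p < d -> 0 < p' < d -> M < q -> M < q' ->
    Rabs (Qf p q - Qf p' q') < eps.
Proof.
  intros eps Heps.
  assert (HPI : 0 < PI) by apply PI_RGT_0.
  exists (eps / 2), (8 * PI / eps).
  assert (HM : 0 < 8 * PI / eps) by (apply Rdiv_lt_0_compat; lra).
  split; [lra|]. split; [lra|].
  intros p p' q q' Hp Hp' Hq Hq'.
  assert (E : Qf p q - Qf p' q' =
     (RInt (fun u => cos u * / u) p p' - RInt (fun u => / u) p p') + RInt (fun u => cos u * / u) q' q).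
  { unfold Qf.
    rewrite <- (RInt_Chasles' _ p p' q) by (apply ex_cu; lra).
    rewrite <- (RInt_Chasles' _ p' q' q) by (apply ex_cu; lra).
    rewrite <- (RInt_Chasles' (fun u => / u) p p' 1) by (apply ex_inv; lra).
    ring. }
  rewrite E.
  eapply Rle_lt_trans; [apply Rabs_triang|].
  assert (B1 : Rabs (RInt (fun u => cos u * / u) p p' - RInt (fun u => / u) p p') <= Rabs (p' - p) * 1).
  { rewrite <- RInt_minus' by (apply ex_cu || apply ex_inv; lra).
    apply abs_RInt_le_const'.
    - apply ex_RInt_minus'; [apply ex_cu | apply ex_inv]; lra.
    - intros u Hu. assert (0 < u).
      { destruct (Rle_dec p p'); [rewrite Rmin_left in Hu | rewrite Rmin_right in Hu]; lra. }
      replace (cos u * / u - / u) with (- (1 - cos (1 * u)) * / u) by (rewrite Rmult_1_l; ring).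
      rewrite Rabs_mult, Rabs_Ropp, (Rabs_right (/ u)) by (left; apply Rinv_0_lt_compat; lra).
      assert (H1 := one_minus_cos 1 u ltac:(lra) ltac:(lra)).
      apply Rle_trans with (1 * u * / u).
      + apply Rmult_le_compat_r; [left; apply Rinv_0_lt_compat; lra | auto].
      + right; field; lra. }
  assert (B2 : Rabs (RInt (fun u => cos u * / u) q' q) <= 4 * PI / Rmin q' q).
  { apply cu_bound; lra. }
  assert (Hmin : 8 * PI / eps < Rmin q' q) by (apply Rmin_glb_lt; lra).
  assert (B2' : 4 * PI / Rmin q' q < eps / 2).
  { apply Rlt_le_trans with (4 * PI / (8 * PI / eps)).
    - unfold Rdiv. apply Rmult_lt_compat_l; [lra|]. apply Rinv_lt_contravar; [apply Rmult_lt_0_compat|]; lra.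
    - right; field; lra. }
  assert (Rabs (p' - p) < eps / 2) by (apply bnd_Rabs_lt; lra).
  lra.
Qed.

Definition ft (k : R -> R) (t : R) := fun x => (cos (t * x) - 1) * k x / x.

Lemma ex_ft k al t : kprops k al -> 0 <= t -> forall a b, 0 < a -> 0 < b -> ex_RInt (ft k t) a b.
Proof.
  intros Hk Ht a b Ha Hb.
  apply ex_RInt_ext with (fun x => cos (t * x) * (k x / x) - k x / x).
  - intros. unfold ft. fixeq. unfold Rdiv. ring.
  - apply ex_RInt_minus'; [apply (ex_ckx k al t Hk) | apply (ex_kx k al Hk)]; auto.
Qed.

Lemma ckx_bound k al t p q : kprops k al -> 0 < t -> 0 < p -> 0 < q ->
  Rabs (RInt (fun x => cos (t * x) * (k x / x)) p q) <= 4 * PI * al / (Rmin p q * t).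
Proof.
  intros Hk Ht Hp Hq.
  assert (Hal : 0 <= al) by (destruct Hk as (_ & Hn & H0); rewrite <- H0; apply Hn; lra).
  assert (G : forall p q, 0 < p -> p <= q ->
     Rabs (RInt (fun x => cos (t * x) * (k x / x)) p q) <= 4 * PI * al / (p * t)).
  { intros p0 q0 Hp0 Hpq.
    eapply Rle_trans.
    - apply (cos_mono_bound t (fun x => k x / x)); try lra.
      + intros; apply (kx_mono k al Hk); auto; lra.
      + intros; apply (kx_nn k al Hk); auto; lra.
    - assert (k p0 <= al) by (apply (k_le_al k al Hk); auto; lra).
      assert (HPI : 0 < PI) by apply PI_RGT_0.
      replace (4 * PI * (k p0 / p0) / t) with (k p0 * (4 * PI / (p0 * t))) by (field; lra).
      replace (4 * PI * al / (p0 * t)) with (al * (4 * PI / (p0 * t))) by (field; lra).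
      apply Rmult_le_compat_r; auto. left; apply Rdiv_lt_0_compat; [lra| apply Rmult_lt_0_compat; lra]. }
  destruct (Rle_dec p q).
  - rewrite Rmin_left by lra. apply G; lra.
  - rewrite Rmin_right by lra. rewrite RInt_swap' by (apply (ex_ckx k al t Hk); lra).
    rewrite Rabs_Ropp. apply G; lra.
Qed.

Lemma V_exists k al t : kprops k al -> 0 < al ->
  (exists l, improper_int_from_is (fun x => k x / x) 2 l) -> 0 < t ->
  exists l, improper_int_0_inf_is (ft k t) l.
Proof.
  intros Hk Hal [l2 Htail] Ht.
  apply improper_from_cauchy.
  { intros; apply (ex_ft k al t Hk); auto; lra. }
  intros eps Heps.
  assert (HPI : 0 < PI) by apply PI_RGT_0.
  destruct (Htail (eps / 6) ltac:(lra)) as (M2 & HM2 & HT).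
  assert (Tail : forall b b', M2 < b -> M2 < b' -> Rabs (RInt (fun x => k x / x) b' b) < eps / 3).
  { intros b b' Hb Hb'.
    destruct (HT b Hb) as (v & Hv & Hvl). destruct (HT b' Hb') as (v' & Hv' & Hvl').
    apply RInt_is_val in Hv. apply RInt_is_val in Hv'.
    rewrite <- (RInt_Chasles' (fun x => k x / x) 2 b' b) in Hv by (apply (ex_kx k al Hk); lra).
    apply Rabs_lt_bnd in Hvl. apply Rabs_lt_bnd in Hvl'. apply bnd_Rabs_lt. lra. }
  set (d := eps / (3 * (t * al + 1))).
  assert (Hd : 0 < d) by (unfold d; apply Rdiv_lt_0_compat; [lra|]; assert (0 < t * al) by (apply Rmult_lt_0_compat; lra); lra).
  set (M := Rmax M2 (12 * PI * al / (t * eps))).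
  assert (HM : 0 < M) by (unfold M; assert (M2 <= Rmax M2 (12 * PI * al / (t * eps))) by apply Rmax_l; lra).
  exists d, M. split; auto. split; auto.
  intros a a' b b' Ha Ha' Hb Hb'.
  assert (M2 <= M) by apply Rmax_l.
  assert (M3 : 12 * PI * al / (t * eps) <= M) by apply Rmax_r.
  rewrite <- (RInt_Chasles' (ft k t) a a' b) by (apply (ex_ft k al t Hk); lra).
  rewrite <- (RInt_Chasles' (ft k t) a' b' b) by (apply (ex_ft k al t Hk); lra).
  replace (RInt (ft k t) a a' + (RInt (ft k t) a' b' + RInt (ft k t) b' b) - RInt (ft k t) a' b')
    with (RInt (ft k t) a a' + RInt (ft k t) b' b) by ring.
  assert (B1 : Rabs (RInt (ft k t) a a') <= Rabs (a' - a) * (t * al)).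
  { apply abs_RInt_le_const'.
    - apply (ex_ft k al t Hk); lra.
    - intros x Hx. assert (0 < x).
      { destruct (Rle_dec a a'); [rewrite Rmin_left in Hx | rewrite Rmin_right in Hx]; lra. }
      unfold ft. replace ((cos (t * x) - 1) * k x / x) with (- (1 - cos (t * x)) * (k x / x)) by (field; lra).
      rewrite Rabs_mult, Rabs_Ropp.
      rewrite (Rabs_right (k x / x)) by (apply Rle_ge; apply (kx_nn k al Hk); auto).
      assert (H1 := one_minus_cos t x ltac:(lra) ltac:(lra)).
      assert (k x <= al) by (apply (k_le_al k al Hk); auto; lra).
      apply Rle_trans with (t * x * (k x / x)).
      + apply Rmult_le_compat_r; [apply (kx_nn k al Hk); auto | auto].
      + replace (t * x * (k x / x)) with (t * k x) by (field; lra).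
        apply Rmult_le_compat_l; lra. }
  assert (B1' : Rabs (a' - a) * (t * al) < eps / 3).
  { assert (Rabs (a' - a) < d) by (apply bnd_Rabs_lt; lra).
    assert (0 < t * al) by (apply Rmult_lt_0_compat; lra).
    apply Rle_lt_trans with (d * (t * al)).
    - apply Rmult_le_compat_r; lra.
    - unfold d. apply Rmult_lt_reg_r with (3 * (t * al + 1)); [lra|].
      field_simplify; lra. }
  assert (E2 : RInt (ft k t) b' b = RInt (fun x => cos (t * x) * (k x / x)) b' b - RInt (fun x => k x / x) b' b).
  { rewrite <- RInt_minus' by (apply (ex_ckx k al t Hk) || apply (ex_kx k al Hk); lra).
    apply RInt_ext. intros. unfold ft. fixeq. unfold Rdiv. ring. }
  assert (B2 : Rabs (RInt (fun x => cos (t * x) * (k x / x)) b' b) < eps / 3).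
  { eapply Rle_lt_trans; [apply (ckx_bound k al); auto; lra|].
    assert (Hmin : M < Rmin b' b) by (apply Rmin_glb_lt; lra).
    set (m := Rmin b' b) in *.
    assert (Hm0 : 0 < m) by lra.
    assert (H1 : 12 * PI * al < m * (t * eps)).
    { assert (0 < t * eps) by (apply Rmult_lt_0_compat; lra).
      replace (12 * PI * al) with (12 * PI * al / (t * eps) * (t * eps)) by (field; lra).
      apply Rmult_lt_compat_r; lra. }
    assert (0 < m * t) by (apply Rmult_lt_0_compat; lra).
    apply Rmult_lt_reg_r with (m * t); auto.
    replace (4 * PI * al / (m * t) * (m * t)) with (4 * PI * al) by (field; lra).
    replace (eps / 3 * (m * t)) with (m * (t * eps) / 3) by (field; lra).
    lra. }
  rewrite E2.
  assert (B3 := Tail b b' ltac:(lra) ltac:(lra)).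
  eapply Rle_lt_trans; [apply Rabs_triang|].
  eapply Rle_lt_trans; [apply Rplus_le_compat_l; apply Rabs_sub_triang|].
  lra.
Qed.


Definition Dfun k t := phi_exp_re k t + RInt (fun x => k x / x) (/ t) 1.

Lemma V_spec k al t : kprops k al -> 0 < al ->
  (exists l, improper_int_from_is (fun x => k x / x) 2 l) -> 0 < t ->
  improper_int_0_inf_is (ft k t) (phi_exp_re k t).
Proof.
  intros. unfold phi_exp_re, improper_int_0_inf. apply epsilon_spec.
  apply (V_exists k al); auto.
Qed.

Lemma D_cauchy k al : kprops k al -> 0 < al ->
  (exists l, improper_int_from_is (fun x => k x / x) 2 l) ->
  (forall eps, 0 < eps -> exists d, 0 < d /\ forall y, 0 <= y < 0 + d -> Rabs (k y - k 0) < eps) ->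
  forall eps, 0 < eps -> exists T, forall s t, T < s -> T < t -> Rabs (Dfun k s - Dfun k t) < eps.
Proof.
  intros Hk Hal Htail Hrc eps Heps.
  assert (HPI : 0 < PI) by apply PI_RGT_0.
  set (eta := eps / (8 * (1 + 8 * PI))).
  assert (Heta : 0 < eta) by (unfold eta; apply Rdiv_lt_0_compat; lra).
  destruct (Hrc eta Heta) as (d0 & Hd0 & Hc0).
  set (dl := Rmin (d0 / 2) (1 / 2)).
  assert (Hdl1 : dl <= d0 / 2) by apply Rmin_l. assert (Hdl2 : dl <= 1 / 2) by apply Rmin_r.
  assert (Hdl : 0 < dl < 1) by (split; [apply Rmin_glb_lt; lra | lra]).
  destruct Hk as (Hm & Hn & H0). assert (Hk : kprops k al) by (split; auto).
  assert (Hkd : forall y, 0 <= y <= dl -> al - k y <= eta).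
  { intros y Hy. assert (Hh := Hc0 y ltac:(lra)). rewrite H0 in Hh.
    apply Rabs_lt_bnd in Hh. lra. }
  destruct (Q_cauchy (eps / (4 * al)) ltac:(apply Rdiv_lt_0_compat; lra)) as (dQ & MQ & HdQ & HMQ & HQ).
  set (T := Rmax (2 / dl) (64 * PI * al / (dl * eps))).
  assert (HT1 : 2 / dl <= T) by apply Rmax_l. assert (HT2 : 64 * PI * al / (dl * eps) <= T) by apply Rmax_r.
  assert (HT0 : 0 < 2 / dl) by (apply Rdiv_lt_0_compat; lra).
  exists T.
  assert (AP : forall tau dd MM a b, T < tau ->
     (forall a b, 0 < a < dd -> MM < b -> exists v, RInt_is (ft k tau) a b v /\ Rabs (v - phi_exp_re k tau) < eps / 8) ->
     0 < a -> a < dd -> a < / tau -> MM < b -> 1 < b ->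
     Rabs (Dfun k tau - (al * Qf (tau * a) (tau * b) - RInt (fun x => k x / x) 1 b)) < 3 * eps / 8).
  { intros tau dd MM a b Htau HV Ha Had Hat HbM Hb1.
    assert (Htp : 0 < tau) by lra.
    destruct (HV a b ltac:(lra) HbM) as (v & Hv & Hvl).
    apply RInt_is_val in Hv.
    assert (Htd : / tau < dl).
    { apply Rlt_le_trans with (/ (2 / dl)).
      - apply Rinv_lt_contravar; [apply Rmult_lt_0_compat|]; lra.
      - replace (/ (2 / dl)) with (dl / 2) by (field; lra). lra. }
    assert (EB := E_bound k al Hk dl eta tau a b Hdl Heta Hkd Htp Htd ltac:(lra) Hb1).
    change (fun x => (cos (tau * x) - 1) * k x / x) with (ft k tau) in EB.
    fold (Qf (tau * a) (tau * b)) in EB.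
    rewrite Hv in EB.
    assert (E1 : (1 + 8 * PI) * eta = eps / 8) by (unfold eta; field; lra).
    assert (E2 : 8 * PI * al / (dl * tau) < eps / 8).
    { assert (0 < dl * tau) by (apply Rmult_lt_0_compat; lra).
      assert (0 < dl * eps) by (apply Rmult_lt_0_compat; lra).
      assert (H64 : 64 * PI * al < tau * (dl * eps)).
      { replace (64 * PI * al) with (64 * PI * al / (dl * eps) * (dl * eps)) by (field; lra).
        apply Rmult_lt_compat_r; lra. }
      apply Rmult_lt_reg_r with (dl * tau); auto.
      replace (8 * PI * al / (dl * tau) * (dl * tau)) with (8 * PI * al) by (field; lra).
      replace (eps / 8 * (dl * tau)) with (tau * (dl * eps) / 8) by (field; lra). lra. }
    unfold Dfun.
    apply Rabs_lt_bnd in Hvl. apply Rabs_le_bnd in EB. apply bnd_Rabs_lt.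
    assert (eta + 8 * PI * eta = (1 + 8 * PI) * eta) by ring. lra. }
  intros s t Hs Ht.
  assert (Htp : 0 < t) by lra. assert (Hsp : 0 < s) by lra.
  destruct (V_spec k al t Hk Hal Htail Htp (eps / 8) ltac:(lra)) as (dt & Mt & Hdt & HMt & HVt).
  destruct (V_spec k al s Hk Hal Htail Hsp (eps / 8) ltac:(lra)) as (ds & Ms & Hds & HMs & HVs).
  assert (Hit : 0 < / t) by (apply Rinv_0_lt_compat; lra).
  assert (His : 0 < / s) by (apply Rinv_0_lt_compat; lra).
  assert (HQt : 0 < dQ / t) by (apply Rdiv_lt_0_compat; lra).
  assert (HQs : 0 < dQ / s) by (apply Rdiv_lt_0_compat; lra).
  set (a0 := Rmin (Rmin (Rmin dt (/ t)) (Rmin ds (/ s))) (Rmin (dQ / t) (dQ / s))).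
  assert (Ha0 : 0 < a0) by (unfold a0; repeat apply Rmin_glb_lt; lra).
  assert (A1 : a0 <= dt /\ a0 <= / t /\ a0 <= ds /\ a0 <= / s /\ a0 <= dQ / t /\ a0 <= dQ / s).
  { unfold a0.
    assert (X1 := Rmin_l (Rmin (Rmin dt (/ t)) (Rmin ds (/ s))) (Rmin (dQ / t) (dQ / s))).
    assert (X2 := Rmin_r (Rmin (Rmin dt (/ t)) (Rmin ds (/ s))) (Rmin (dQ / t) (dQ / s))).
    assert (X3 := Rmin_l (Rmin dt (/ t)) (Rmin ds (/ s))).
    assert (X4 := Rmin_r (Rmin dt (/ t)) (Rmin ds (/ s))).
    assert (X5 := Rmin_l dt (/ t)). assert (X6 := Rmin_r dt (/ t)).
    assert (X7 := Rmin_l ds (/ s)). assert (X8 := Rmin_r ds (/ s)).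
    assert (X9 := Rmin_l (dQ / t) (dQ / s)). assert (X10 := Rmin_r (dQ / t) (dQ / s)).
    lra. }
  set (a := a0 / 2).
  set (b0 := Rmax (Rmax (Rmax Mt 1) (Rmax Ms 1)) (Rmax (MQ / t) (MQ / s))).
  assert (B1 : Mt <= b0 /\ 1 <= b0 /\ Ms <= b0 /\ MQ / t <= b0 /\ MQ / s <= b0).
  { unfold b0.
    assert (X1 := Rmax_l (Rmax (Rmax Mt 1) (Rmax Ms 1)) (Rmax (MQ / t) (MQ / s))).
    assert (X2 := Rmax_r (Rmax (Rmax Mt 1) (Rmax Ms 1)) (Rmax (MQ / t) (MQ / s))).
    assert (X3 := Rmax_l (Rmax Mt 1) (Rmax Ms 1)).
    assert (X4 := Rmax_r (Rmax Mt 1) (Rmax Ms 1)).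
    assert (X5 := Rmax_l Mt 1). assert (X6 := Rmax_r Mt 1).
    assert (X7 := Rmax_l Ms 1). assert (X8 := Rmax_r Ms 1).
    assert (X9 := Rmax_l (MQ / t) (MQ / s)). assert (X10 := Rmax_r (MQ / t) (MQ / s)).
    lra. }
  set (b := b0 + 1).
  assert (Apt := AP t dt Mt a b Ht HVt ltac:(unfold a; lra) ltac:(unfold a; lra) ltac:(unfold a; lra) ltac:(unfold b; lra) ltac:(unfold b; lra)).
  assert (Aps := AP s ds Ms a b Hs HVs ltac:(unfold a; lra) ltac:(unfold a; lra) ltac:(unfold a; lra) ltac:(unfold b; lra) ltac:(unfold b; lra)).
  assert (Qst : Rabs (Qf (s * a) (s * b) - Qf (t * a) (t * b)) < eps / (4 * al)).
  { apply HQ.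
    - split; [apply Rmult_lt_0_compat; unfold a; lra|].
      replace dQ with (s * (dQ / s)) by (field; lra). apply Rmult_lt_compat_l; unfold a; lra.
    - split; [apply Rmult_lt_0_compat; unfold a; lra|].
      replace dQ with (t * (dQ / t)) by (field; lra). apply Rmult_lt_compat_l; unfold a; lra.
    - replace MQ with (s * (MQ / s)) by (field; lra). apply Rmult_lt_compat_l; unfold b; lra.
    - replace MQ with (t * (MQ / t)) by (field; lra). apply Rmult_lt_compat_l; unfold b; lra. }
  assert (Qst' : Rabs (al * Qf (s * a) (s * b) - al * Qf (t * a) (t * b)) < eps / 4).
  { rewrite <- Rmult_minus_distr_l, Rabs_mult, (Rabs_right al) by lra.
    replace (eps / 4) with (al * (eps / (4 * al))) by (field; lra).
    apply Rmult_lt_compat_l; lra. }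
  apply Rabs_lt_bnd in Apt. apply Rabs_lt_bnd in Aps. apply Rabs_lt_bnd in Qst'.
  apply bnd_Rabs_lt. lra.
Qed.


Lemma RInt_inv_ln p q : 0 < p -> 0 < q -> RInt (fun y => / y) p q = ln q - ln p.
Proof.
  intros Hp Hq. apply is_RInt_unique.
  replace (ln q - ln p) with (minus (ln q) (ln p)) by reflexivity.
  apply (is_RInt_derive ln (fun y => / y)).
  - intros x Hx. apply is_derive_ln.
    destruct (Rle_dec p q); [rewrite Rmin_left in Hx | rewrite Rmin_right in Hx]; lra.
  - intros x Hx. apply continuous_Rinv.
    destruct (Rle_dec p q); [rewrite Rmin_left in Hx | rewrite Rmin_right in Hx]; lra.
Qed.

Lemma phi_abs_exp k t : phi_abs k t = exp (phi_exp_re k t).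
Proof.
  unfold phi_abs, phi_re, phi_im.
  set (r := phi_exp_re k t). set (i := phi_exp_im k t).
  assert (H1 := sin2_cos2 i). unfold Rsqr in H1.
  replace ((exp r * cos i) ^ 2 + (exp r * sin i) ^ 2) with (exp r ^ 2) by (simpl; nra).
  apply sqrt_pow2. left; apply exp_pos.
Qed.

Lemma phi_exp_re_abs k t : phi_exp_re k t = phi_exp_re k (Rabs t).
Proof.
  unfold phi_exp_re. f_equal. apply functional_extensionality. intro x.
  unfold Rabs. destruct (Rcase_abs t); [|reflexivity].
  replace (- t * x) with (- (t * x)) by ring. rewrite cos_neg. reflexivity.
Qed.

Lemma exp_cont y0 eps : 0 < eps -> exists rho, 0 < rho /\
  forall y, Rabs (y - y0) < rho -> Rabs (exp y - exp y0) < eps.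
Proof.
  intros Heps.
  assert (H := derivable_continuous_pt exp y0 (derivable_pt_exp y0)).
  unfold continuity_pt, continue_in, limit1_in, limit_in in H.
  destruct (H eps Heps) as (rho & Hrho & H').
  exists rho. split; auto. intros y Hy.
  destruct (Req_dec y y0) as [->|Hne].
  - rewrite Rminus_diag, Rabs_R0. auto.
  - apply H'. split.
    + unfold D_x, no_cond. split; auto.
    + simpl. unfold R_dist. auto.
Qed.

Lemma lip_cont (f : R -> R) x0 r K : 0 < r -> 0 <= K ->
  (forall y, Rabs (y - x0) < r -> Rabs (f y - f x0) <= K * Rabs (y - x0)) -> continuity_pt f x0.
Proof.
  intros Hr HK H. unfold continuity_pt, continue_in, limit1_in, limit_in.
  intros eps Heps. exists (Rmin r (eps / (K + 1))). split.
  { apply Rmin_glb_lt; auto. apply Rdiv_lt_0_compat; lra. }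
  intros y [_ Hy]. simpl in Hy |- *. unfold R_dist in *.
  assert (Hy1 : Rabs (y - x0) < r) by (eapply Rlt_le_trans; [exact Hy| apply Rmin_l]).
  assert (Hy2 : Rabs (y - x0) < eps / (K + 1)) by (eapply Rlt_le_trans; [exact Hy| apply Rmin_r]).
  eapply Rle_lt_trans; [apply H; auto|].
  assert (0 <= Rabs (y - x0)) by apply Rabs_pos.
  apply Rle_lt_trans with ((K + 1) * Rabs (y - x0)); [nra|].
  replace eps with ((K + 1) * (eps / (K + 1))) by (field; lra).
  apply Rmult_lt_compat_l; lra.
Qed.

Definition Lfun (k : R -> R) (al t : R) := Rpower t al * exp (- RInt (fun x => k x / x) (/ t) 1).

Lemma L_pos k al t : 0 < t -> 0 < Lfun k al t.
Proof.
  intros. unfold Lfun, Rpower. apply Rmult_lt_0_compat; apply exp_pos.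
Qed.

Lemma G_cont k al t0 : kprops k al -> 0 < al -> 1 < t0 ->
  continuity_pt (fun t => - RInt (fun x => k x / x) (/ t) 1) t0.
Proof.
  intros Hk Hal Ht0.
  apply (lip_cont _ t0 (t0 / 2) (4 * al / t0)); try lra.
  { apply Rdiv_le_0_compat; lra. }
  intros y Hy. apply Rabs_lt_bnd in Hy.
  assert (Hyp : 0 < y) by lra.
  assert (Hi1 : 0 < / y) by (apply Rinv_0_lt_compat; lra).
  assert (Hi2 : 0 < / t0) by (apply Rinv_0_lt_compat; lra).
  replace (- RInt (fun x => k x / x) (/ y) 1 - - RInt (fun x => k x / x) (/ t0) 1)
    with (- RInt (fun x => k x / x) (/ y) (/ t0)).
  2: { rewrite <- (RInt_Chasles' (fun x => k x / x) (/ y) (/ t0) 1) by (apply (ex_kx k al Hk); lra). ring. }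
  rewrite Rabs_Ropp.
  eapply Rle_trans.
  - apply abs_RInt_le_const' with (M := al * (2 * t0)).
    + apply (ex_kx k al Hk); lra.
    + intros x Hx.
      assert (Hlow : / (2 * t0) <= Rmin (/ y) (/ t0)).
      { apply Rmin_glb; apply Rinv_le_contravar; lra. }
      assert (Hxp : 0 < x) by (assert (0 < / (2 * t0)) by (apply Rinv_0_lt_compat; lra); lra).
      rewrite Rabs_right by (apply Rle_ge, (kx_nn k al Hk); lra).
      assert (k x <= al) by (apply (k_le_al k al Hk); lra).
      assert (0 <= k x) by (destruct Hk as (_ & Hn & _); apply Hn; lra).
      assert (/ x <= 2 * t0).
      { rewrite <- (Rinv_inv (2 * t0)). apply Rinv_le_contravar; [apply Rinv_0_lt_compat; lra| lra]. }
      unfold Rdiv. apply Rle_trans with (al * / x).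
      * apply Rmult_le_compat_r; [left; apply Rinv_0_lt_compat| ]; lra.
      * apply Rmult_le_compat_l; lra.
  - replace (/ t0 - / y) with ((y - t0) / (y * t0)) by (field; lra).
    unfold Rdiv. rewrite Rabs_mult. rewrite (Rabs_right (/ (y * t0))) by (left; apply Rinv_0_lt_compat, Rmult_lt_0_compat; lra).
    assert (0 <= Rabs (y - t0)) by apply Rabs_pos.
    assert (/ (y * t0) <= 2 / (t0 * t0)).
    { replace (2 / (t0 * t0)) with (/ (t0 / 2 * t0)) by (field; lra).
      apply Rinv_le_contravar; [apply Rmult_lt_0_compat; lra| apply Rmult_le_compat_r; lra]. }
    replace (4 * al * / t0 * Rabs (y - t0)) with (Rabs (y - t0) * (2 / (t0 * t0)) * (al * (2 * t0))) by (field; lra).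
    apply Rmult_le_compat_r; [apply Rmult_le_pos; lra|].
    apply Rmult_le_compat_l; lra.
Qed.

Lemma L_cont k al t0 : kprops k al -> 0 < al -> 1 < t0 -> continuity_pt (Lfun k al) t0.
Proof.
  intros Hk Hal Ht0. unfold Lfun.
  apply continuity_pt_mult.
  - apply derivable_continuous_pt. exists (al * Rpower t0 (al - 1)). apply derivable_pt_lim_power. lra.
  - apply continuity_pt_comp with (f1 := fun t => - RInt (fun x => k x / x) (/ t) 1) (f2 := exp).
    + apply (G_cont k al); auto.
    + apply derivable_continuous_pt, derivable_pt_exp.
Qed.


Lemma L_ratio k al t x : kprops k al -> 0 < t -> 0 < x ->
  Lfun k al (t * x) / Lfun k al t = exp (RInt (fun y => (al - k y) / y) (/ (t * x)) (/ t)).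
Proof.
  intros Hk Ht Hx.
  assert (Htx : 0 < t * x) by (apply Rmult_lt_0_compat; lra).
  assert (Hi1 : 0 < / t) by (apply Rinv_0_lt_compat; lra).
  assert (Hi2 : 0 < / (t * x)) by (apply Rinv_0_lt_compat; lra).
  assert (E : RInt (fun y => (al - k y) / y) (/ (t * x)) (/ t) =
     al * RInt (fun y => / y) (/ (t * x)) (/ t) - RInt (fun y => k y / y) (/ (t * x)) (/ t)).
  { rewrite <- RInt_scal' by (apply ex_inv; lra).
    rewrite <- RInt_minus'.
    - apply RInt_ext. intros. fixeq. unfold Rdiv. ring.
    - apply ex_RInt_scal'. apply ex_inv; lra.
    - apply (ex_kx k al Hk); lra. }
  rewrite E, RInt_inv_ln by lra.
  rewrite !ln_Rinv by lra. rewrite ln_mult by lra.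
  unfold Lfun, Rpower. rewrite ln_mult by lra.
  rewrite <- (RInt_Chasles' (fun y => k y / y) (/ (t * x)) (/ t) 1) by (apply (ex_kx k al Hk); lra).
  set (G := RInt (fun y => k y / y) (/ t) 1).
  set (H := RInt (fun y => k y / y) (/ (t * x)) (/ t)).
  replace (al * (ln t + ln x)) with (al * ln t + al * ln x) by ring.
  rewrite !exp_plus.
  replace (al * (- ln t - - (ln t + ln x)) - H) with (al * ln x + (- H)) by ring.
  rewrite exp_plus.
  replace (- (H + G)) with (- H + - G) by ring. rewrite exp_plus.
  assert (0 < exp (al * ln t)) by apply exp_pos.
  assert (0 < exp (- G)) by apply exp_pos.
  field. lra.
Qed.

Lemma L_slow k al : kprops k al -> 0 < al ->
  (forall eps, 0 < eps -> exists d, 0 < d /\ forall y, 0 <= y < 0 + d -> Rabs (k y - k 0) < eps) ->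
  slowly_varying (Lfun k al).
Proof.
  intros Hk Hal Hrc x Hx eps Heps.
  destruct (exp_cont 0 eps Heps) as (rho & Hrho & He).
  set (K := Rabs (x - 1) * (1 + x) / x + 1).
  assert (HK : 1 <= K).
  { unfold K. assert (0 <= Rabs (x - 1) * (1 + x) / x).
    { apply Rdiv_le_0_compat; [apply Rmult_le_pos; [apply Rabs_pos| lra] | lra]. } lra. }
  set (eta := rho / (2 * K)).
  assert (Heta : 0 < eta) by (unfold eta; apply Rdiv_lt_0_compat; lra).
  destruct (Hrc eta Heta) as (d0 & Hd0 & Hc0).
  destruct Hk as (Hm & Hn & H0). assert (Hk : kprops k al) by (split; auto).
  set (M := Rmax 2 (Rmax (2 / d0) (2 / (d0 * x)))).
  assert (HM1 : 2 <= M) by apply Rmax_l.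
  assert (HM2 : Rmax (2 / d0) (2 / (d0 * x)) <= M) by apply Rmax_r.
  assert (HM3 : 2 / d0 <= Rmax (2 / d0) (2 / (d0 * x))) by apply Rmax_l.
  assert (HM4 : 2 / (d0 * x) <= Rmax (2 / d0) (2 / (d0 * x))) by apply Rmax_r.
  exists M. split; [lra|].
  intros t Ht.
  assert (Htp : 0 < t) by lra.
  assert (Htx : 0 < t * x) by (apply Rmult_lt_0_compat; lra).
  assert (Hi1 : 0 < / t) by (apply Rinv_0_lt_compat; lra).
  assert (Hi2 : 0 < / (t * x)) by (apply Rinv_0_lt_compat; lra).
  assert (Hs1 : / t < d0).
  { apply Rlt_le_trans with (/ (2 / d0)).
    - apply Rinv_lt_contravar; [apply Rmult_lt_0_compat; [apply Rdiv_lt_0_compat|]|]; lra.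
    - replace (/ (2 / d0)) with (d0 / 2) by (field; lra). lra. }
  assert (Hs2 : / (t * x) < d0).
  { assert (0 < d0 * x) by (apply Rmult_lt_0_compat; lra).
    assert (2 / (d0 * x) < t) by lra.
    apply Rlt_le_trans with (/ (2 / (d0 * x) * x)).
    - apply Rinv_lt_contravar.
      + apply Rmult_lt_0_compat; [apply Rmult_lt_0_compat; [apply Rdiv_lt_0_compat|]|]; lra.
      + apply Rmult_lt_compat_r; lra.
    - replace (/ (2 / (d0 * x) * x)) with (d0 / 2) by (field; lra). lra. }
  rewrite L_ratio by auto.
  replace 1 with (exp 0) by apply exp_0.
  apply He. rewrite Rminus_0_r.
  assert (Hb : Rabs (RInt (fun y => (al - k y) / y) (/ (t * x)) (/ t)) <= Rabs (/ t - / (t * x)) * (eta * (t * (1 + x)))).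
  { apply abs_RInt_le_const'.
    - apply ex_RInt_ext with (fun y => al * / y - k y / y).
      + intros. fixeq. unfold Rdiv. ring.
      + apply ex_RInt_minus'; [apply ex_RInt_scal'; apply ex_inv | apply (ex_kx k al Hk)]; lra.
    - intros y Hy.
      assert (Hlow : / (t * (1 + x)) <= Rmin (/ (t * x)) (/ t)).
      { apply Rmin_glb; apply Rinv_le_contravar; try lra; nra. }
      assert (Hup : Rmax (/ (t * x)) (/ t) < d0) by (apply Rmax_lub_lt; lra).
      assert (0 < / (t * (1 + x))) by (apply Rinv_0_lt_compat; nra).
      assert (Hyp : 0 < y) by lra.
      assert (Hc := Hc0 y ltac:(lra)). rewrite H0 in Hc. apply Rabs_lt_bnd in Hc.
      assert (k y <= al) by (apply (k_le_al k al Hk); lra).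
      rewrite Rabs_right by (apply Rle_ge, Rdiv_le_0_compat; lra).
      assert (/ y <= t * (1 + x)).
      { rewrite <- (Rinv_inv (t * (1 + x))). apply Rinv_le_contravar; [|lra]. apply Rinv_0_lt_compat; nra. }
      unfold Rdiv. apply Rle_trans with (eta * / y).
      + apply Rmult_le_compat_r; [left; apply Rinv_0_lt_compat|]; lra.
      + apply Rmult_le_compat_l; lra. }
  eapply Rle_lt_trans; [exact Hb|].
  replace (/ t - / (t * x)) with ((x - 1) / (t * x)) by (field; lra).
  unfold Rdiv at 1. rewrite Rabs_mult, (Rabs_right (/ (t * x))) by (left; auto).
  replace (Rabs (x - 1) * / (t * x) * (eta * (t * (1 + x)))) with (eta * (Rabs (x - 1) * (1 + x) / x)) by (field; lra).
  assert (0 <= Rabs (x - 1) * (1 + x) / x).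
  { apply Rdiv_le_0_compat; [apply Rmult_le_pos; [apply Rabs_pos| lra] | lra]. }
  apply Rle_lt_trans with (eta * K).
  - apply Rmult_le_compat_l; [lra|]. unfold K. lra.
  - unfold eta. replace (rho / (2 * K) * K) with (rho / 2) by (field; lra). lra.
Qed.


Theorem mainTheorem6 (k : R -> R) (alpha : R) :
  is_tail_function k ->
  (exists l, improper_int_from_is (fun x => k x / x) 2 l) ->
  k 0 = alpha -> 2 < alpha ->
  exists (L : R -> R) (B : R),
    (forall t, 1 < t -> 0 <= L t) /\
    (forall t, 1 < t -> continuity_pt L t) /\
    slowly_varying L /\
    0 < B /\
    (forall eps, 0 < eps -> exists M, 1 < M /\
       forall t, M < Rabs t ->
         Rabs (Rpower (Rabs t) alpha * phi_abs k t / L (Rabs t) - B) < eps).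
Proof.
  intros (Hm & Hn & Hrc & _) Htail H0 Hal2.
  assert (Hk : kprops k alpha).
  { split; [intros; apply Hm; lra|]. split; auto. }
  assert (Hal : 0 < alpha) by lra.
  assert (Hrc0 : forall eps, 0 < eps -> exists d, 0 < d /\ forall y, 0 <= y < 0 + d -> Rabs (k y - k 0) < eps).
  { intros eps Heps. apply (Hrc 0 (Rle_refl 0) eps Heps). }
  destruct (cauchy_fun_lim (Dfun k) (D_cauchy k alpha Hk Hal Htail Hrc0)) as [d0 Hd0].
  exists (Lfun k alpha), (exp d0).
  split; [intros t Ht; left; apply L_pos; lra|].
  split; [intros t Ht; apply L_cont; auto|].
  split; [apply L_slow; auto|].
  split; [apply exp_pos|].
  intros eps Heps.
  destruct (exp_cont d0 eps Heps) as (rho & Hrho & He).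
  destruct (Hd0 rho Hrho) as [T HT].
  exists (Rmax T 1 + 1).
  assert (T <= Rmax T 1) by apply Rmax_l. assert (1 <= Rmax T 1) by apply Rmax_r.
  split; [lra|].
  intros t Ht.
  set (tau := Rabs t) in *.
  assert (Htau : 0 < tau) by lra.
  rewrite phi_abs_exp, phi_exp_re_abs. fold tau.
  replace (Rpower tau alpha * exp (phi_exp_re k tau) / Lfun k alpha tau) with (exp (Dfun k tau)).
  - apply He. apply HT. lra.
  - unfold Lfun, Dfun. rewrite exp_plus, exp_Ropp.
    assert (0 < Rpower tau alpha) by (unfold Rpower; apply exp_pos).
    assert (0 < exp (RInt (fun x => k x / x) (/ tau) 1)) by apply exp_pos.
    field. split; lra.
Qed.
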